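(* Let $f_1,\dots,f_n:\mathbb{R}^d\to\mathbb{R}$ be such that each $f_i$ is $L_i$-smooth and $\mu_i$-strongly convex with minimizer $x_i$. Let $\alpha\in(0,1)$ and $\tilde f(x) = \frac{1}{n}\sum_{i=1}^n f_i(\alpha x + (1-\alpha)x_i)$, with minimizer $x^*$. Let $\overline{\mu} = \frac{1}{n}\sum_i\mu_i$. Then \[ \frac{1}{n}\sum_{i=1}^n\|x_i - x^*\|^2 \leq \frac{\max_i L_i}{\overline{\mu}}\max_{i,j}\|x_i - x_j\|^2. \]
   Context: A differentiable $g$ is $L$-smooth if $\|\nabla g(x)-\nabla g(y)\|\leq L\|x-y\|$ for all $x,y$, and $\mu$-strongly convex if $g(x)\geq g(y)+\langle\nabla g(y),x-y\rangle+\frac{\mu}{2}\|x-y\|^2$ for all $x,y$. *)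

(* Defs.v *)
From HB Require Import structures.
From mathcomp Require Import all_boot all_order all_algebra.
From mathcomp Require Import all_classical all_reals all_analysis.
Set Implicit Arguments. Unset Strict Implicit. Unset Printing Implicit Defensive.
Import Order.TTheory GRing.Theory Num.Theory.
Import numFieldNormedType.Exports.
Local Open Scope ring_scope.

Section Defs.
Variables (R : realType) (d : nat).

(* Euclidean inner product and Euclidean norm on R^d (the library's default
   norm on matrices is the max-norm, so we define the Euclidean one). *)
Definition dotv (u v : 'rV[R]_d) : R := \sum_(j < d) u 0 j * v 0 j.
Definition enorm (u : 'rV[R]_d) : R := Num.sqrt (dotv u u).

Definition grad (f : 'rV[R]_d -> R) (x : 'rV[R]_d) : 'rV[R]_d :=
  \row_(j < d) ('d f x (delta_mx 0 j : 'rV[R]_d)).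

Definition L_smooth (L : R) (f : 'rV[R]_d -> R) : Prop :=
  forall x y, enorm (grad f x - grad f y) <= L * enorm (x - y).

Definition strongly_convex (mu : R) (f : 'rV[R]_d -> R) : Prop :=
  forall x y, f y + dotv (grad f y) (x - y) + mu / 2 * enorm (x - y) ^+ 2 <= f x.

Definition is_minimizer (f : 'rV[R]_d -> R) (x : 'rV[R]_d) : Prop :=
  forall y, f x <= f y.

End Defs.

(* Main.v *)
Require Import Defs.
From HB Require Import structures.
From mathcomp Require Import all_boot all_order all_algebra.
From mathcomp Require Import all_classical all_reals all_analysis.
From mathcomp Require Import ring lra.
Import Order.TTheory GRing.Theory Num.Theory.
Import numFieldNormedType.Exports.
Local Open Scope ring_scope.

Section Helpers.
Variables (R : realType) (d : nat).
Implicit Types (u v w : 'rV[R]_d).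

Lemma dotvC u v : dotv u v = dotv v u.
Proof. by apply: eq_bigr => j _; rewrite mulrC. Qed.

Lemma dotvDl u w v : dotv (u + w) v = dotv u v + dotv w v.
Proof. by rewrite /dotv -big_split; apply: eq_bigr => j _; rewrite !mxE mulrDl. Qed.

Lemma dotvBl u w v : dotv (u - w) v = dotv u v - dotv w v.
Proof. by rewrite /dotv -sumrB; apply: eq_bigr => j _; rewrite !mxE mulrBl. Qed.

Lemma dotvZl a u v : dotv (a *: u) v = a * dotv u v.
Proof. by rewrite /dotv mulr_sumr; apply: eq_bigr => j _; rewrite !mxE mulrA. Qed.

Lemma dotvZr a u v : dotv u (a *: v) = a * dotv u v.
Proof. by rewrite dotvC dotvZl dotvC. Qed.

Lemma dotv_ge0 u : 0 <= dotv u u.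
Proof. by apply: sumr_ge0 => j _; rewrite -expr2 sqr_ge0. Qed.

Lemma enorm_ge0 u : 0 <= enorm u.
Proof. exact: sqrtr_ge0. Qed.

Lemma enorm_sq u : enorm u ^+ 2 = dotv u u.
Proof. by rewrite /enorm sqr_sqrtr // dotv_ge0. Qed.

Lemma enormM u : enorm u * enorm u = dotv u u.
Proof. by rewrite -expr2 enorm_sq. Qed.

Lemma dotv_eq0 u : dotv u u = 0 -> u = 0.
Proof.
move=> h; apply/matrixP => i j; rewrite (ord1 i) mxE.
have H : forall k : 'I_d, u 0 k * u 0 k = 0.
  move=> k; apply: (@psumr_eq0P R _ xpredT (fun j => u 0 j * u 0 j)) => //.
  by move=> l _; rewrite -expr2 sqr_ge0.
by have /eqP := H j; rewrite mulf_eq0 orbb => /eqP.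
Qed.

Lemma dotv0l v : dotv 0 v = 0.
Proof. by rewrite /dotv big1 // => j _; rewrite mxE mul0r. Qed.

Lemma enormZ a u : enorm (a *: u) = `|a| * enorm u.
Proof. by rewrite /enorm dotvZl dotvZr mulrA -expr2 sqrtrM ?sqr_ge0 // sqrtr_sqr. Qed.

Lemma CS u v : dotv u v <= enorm u * enorm v.
Proof.
set a := enorm u; set b := enorm v.
have ha : 0 <= a := enorm_ge0 u. have hb : 0 <= b := enorm_ge0 v.
have Hu : dotv u u = a * a by rewrite enormM.
have Hv : dotv v v = b * b by rewrite enormM.
have E : dotv (b *: u - a *: v) (b *: u - a *: v) =
   b * b * dotv u u - 2 * a * b * dotv u v + a * a * dotv v v.
  rewrite /dotv !mulr_sumr -sumrB -big_split /=.
  by apply: eq_bigr => j _; rewrite !mxE; ring.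
have H0 := dotv_ge0 (b *: u - a *: v).
rewrite E Hu Hv in H0.
have [a0|apos] := eqVneq a 0.
  have -> : u = 0 by apply: dotv_eq0; rewrite Hu a0 mulr0.
  by rewrite dotv0l a0 mul0r.
have [b0|bpos] := eqVneq b 0.
  have -> : v = 0 by apply: dotv_eq0; rewrite Hv b0 mulr0.
  by rewrite dotvC dotv0l b0 mulr0.
have hab : 0 < a * b by rewrite mulr_gt0 // lt0r ?apos ?bpos.
nra.
Qed.

Lemma sc_mid (mu : R) (f : 'rV[R]_d -> R) x y t :
  strongly_convex mu f -> 0 <= t <= 1 ->
  f (t *: x + (1 - t) *: y) <=
  t * f x + (1 - t) * f y - mu / 2 * (t * (1 - t)) * dotv (x - y) (x - y).
Proof.
move=> hsc /andP[t0 t1].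
set w := t *: x + (1 - t) *: y.
have H1 := hsc x w. have H2 := hsc y w.
have E1 : x - w = (1 - t) *: (x - y).
  by apply/matrixP => i j; rewrite !mxE; ring.
have E2 : y - w = (- t) *: (x - y).
  by apply/matrixP => i j; rewrite !mxE; ring.
rewrite E1 enorm_sq dotvZl dotvZr dotvZr in H1.
rewrite E2 enorm_sq dotvZl dotvZr dotvZr in H2.
set G := dotv _ (x - y) in H1 H2.
set Q := dotv (x - y) (x - y) in H1 H2 *.
have t1' : 0 <= 1 - t by lra.
have A := ler_wpM2l t0 H1. have B := ler_wpM2l t1' H2.
have E : t * (f w + (1 - t) * G + mu / 2 * ((1 - t) * ((1 - t) * Q))) +
  (1 - t) * (f w + - t * G + mu / 2 * (- t * (- t * Q))) =
  f w + mu / 2 * (t * (1 - t)) * Q by ring.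
have := lerD A B; rewrite E; lra.
Qed.

Lemma aux1 (A B C M s : R) : 0 < s -> 0 <= M -> B + s * A + M <= C -> C <= B -> A <= 0.
Proof. move=> s0 M0 h1 h2; have : s * A <= 0 by lra. by rewrite pmulr_rle0. Qed.

Lemma aux2 (G c : R) : 0 <= G -> G <= c * G -> c <= 1/2 -> G <= 0.
Proof. by move=> hG h hc; have := ler_wpM2r hG hc; lra. Qed.

Lemma grad0 (L mu : R) (f : 'rV[R]_d -> R) xk :
  L_smooth L f -> strongly_convex mu f -> 0 <= mu -> is_minimizer f xk ->
  grad f xk = 0.
Proof.
move=> hL hsc hmu hmin.
set g := grad f xk.
set s := (2 * (`|L| + 1))^-1.
have s0 : 0 < s by rewrite invr_gt0; have := normr_ge0 L; lra.
have Ls : L * s <= 1/2.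
  rewrite /s -[L * _]/(L / (2 * (`|L| + 1))) ler_pdivrMr; last by have := normr_ge0 L; lra.
  have := ler_norm L; lra.
set y := xk - s *: g.
have H := hsc xk y.
have Ey : xk - y = s *: g by rewrite /y opprB addrC subrK.
rewrite Ey dotvZr in H.
have Hm := hmin y.
have HS := hL xk y.
rewrite Ey enormZ gtr0_norm // in HS.
rewrite -/g in HS.
move: (grad f y) H HS => gy H HS.
move: (f y) (f xk) H Hm => fy fx H Hm.
clearbody g y.
have Hmu' : 0 <= mu / 2 * enorm (s *: g) ^+ 2.
  by apply: mulr_ge0; [apply: divr_ge0 => //; lra | apply: sqr_ge0].
have Hd := @aux1 _ _ _ _ _ s0 Hmu' H Hm.
have HC := CS (g - gy) g.
have HB : dotv gy g = dotv g g - dotv (g - gy) g by rewrite dotvBl opprB addrC subrK.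
have HC2 : dotv (g - gy) g <= L * s * dotv g g.
  apply: (le_trans HC); rewrite -enormM mulrA.
  apply: ler_wpM2r; first exact: enorm_ge0.
  by rewrite -mulrA.
have Hg := dotv_ge0 g.
have h1 : dotv g g <= dotv (g - gy) g by move: Hd; rewrite HB subr_le0.
apply: dotv_eq0; apply/eqP; rewrite eq_le Hg andbT.
exact: (@aux2 _ _ Hg (le_trans h1 HC2) Ls).
Qed.

Lemma lim_N (a c : R) :
  (forall N : nat, (0 < N)%N -> a <= c + c / N%:R) -> a <= c.
Proof.
move=> H; apply/ler_addgt0Pr => e e0.
have [hc|hc] := leP c 0.
  by have := H 1%N isT; rewrite divr1; lra.
have := truncnS_gt (c / e); set N := _.+1 => hN.
have hN0 : (0 < N)%N by [].
have := H N hN0.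
have : c / N%:R < e.
  rewrite ltr_pdivrMr ?ltr0n //.
  by rewrite ltr_pdivrMr // in hN; rewrite mulrC.
lra.
Qed.

Lemma smooth_at0 (L : R) (f : 'rV[R]_d -> R) xk :
  L_smooth L f -> grad f xk = 0 -> forall z, enorm (grad f z) <= L * enorm (z - xk).
Proof. by move=> hL hg z; have := hL z xk; rewrite hg subr0. Qed.

Lemma aux3 (fa fb X Y M a b : R) : fb + (a - b) * X + M <= fa -> 0 <= M ->
  (b - a) * X <= (b - a) * Y -> fb - fa <= (b - a) * Y.
Proof. move=> h1 h2 h3; lra. Qed.

Lemma step_ineq (L mu : R) (f : 'rV[R]_d -> R) xk v (a b : R) :
  L_smooth L f -> strongly_convex mu f -> 0 <= mu -> grad f xk = 0 -> 0 <= a <= b ->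
  f (xk + b *: v) - f (xk + a *: v) <= (b - a) * (L * b * dotv v v).
Proof.
move=> hL hsc hmu hg /andP[a0 ab].
have b0 : 0 <= b by exact: le_trans a0 ab.
have HS := @smooth_at0 _ _ _ hL hg (xk + b *: v).
have H := hsc (xk + a *: v) (xk + b *: v).
have E1 : xk + a *: v - (xk + b *: v) = (a - b) *: v.
  by apply/matrixP => i j; rewrite !mxE; ring.
have E2 : xk + b *: v - xk = b *: v by rewrite addrC addKr.
rewrite E1 dotvZr in H. rewrite E2 enormZ ger0_norm // in HS.
move: (grad f (xk + b *: v)) H HS => G H HS.
move: (f (xk + a *: v)) (f (xk + b *: v)) H => fa fb H.
have HC : dotv G v <= L * b * dotv v v.
  apply: (le_trans (CS _ _)); rewrite -enormM mulrA; apply: ler_wpM2r; first exact: enorm_ge0.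
  by rewrite -mulrA.
have Hmu : 0 <= mu / 2 * enorm ((a - b) *: v) ^+ 2.
  by apply: mulr_ge0; [apply: divr_ge0 => //; lra | apply: sqr_ge0].
have ba : 0 <= b - a by rewrite subr_ge0.
exact: (@aux3 _ _ _ _ _ _ _ H Hmu (ler_wpM2l ba HC)).
Qed.

Lemma aux4 (A B C S T : R) : B - A <= S -> A - C <= T -> B - C <= T + S.
Proof. move=> h1 h2; lra. Qed.

Lemma descent (L mu : R) (f : 'rV[R]_d -> R) xk z :
  L_smooth L f -> strongly_convex mu f -> 0 <= mu -> grad f xk = 0 ->
  f z - f xk <= L / 2 * dotv (z - xk) (z - xk).
Proof.
move=> hL hsc hmu hg0.
set v := z - xk; set Q := dotv v v.
have HQ : 0 <= Q := dotv_ge0 v.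
apply: lim_N => N N0.
have N0' : 0 < N%:R :> R by rewrite ltr0n.
have Nn0 : N%:R != 0 :> R by rewrite gt_eqF.
have key : forall m : nat, f (xk + (m%:R / N%:R) *: v) - f xk
    <= L * Q * (m%:R * (m%:R + 1)) / (2 * N%:R ^+ 2).
  elim=> [|m IH].
    by rewrite mul0r scale0r addr0 subrr !(mul0r, mulr0).
  have hab : (0 <= m%:R / N%:R :> R) && (m%:R / N%:R <= m.+1%:R / N%:R :> R).
    apply/andP; split; first by apply: divr_ge0.
    by rewrite ler_pM2r ?invr_gt0 // ler_nat.
  have h := @step_ineq _ _ _ xk v _ _ hL hsc hmu hg0 hab.
  have := @aux4 _ _ _ _ _ h IH.
  have -> : L * Q * (m%:R * (m%:R + 1)) / (2 * N%:R ^+ 2) +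
     (m.+1%:R / N%:R - m%:R / N%:R) * (L * (m.+1%:R / N%:R) * Q) =
     L * Q * (m.+1%:R * (m.+1%:R + 1)) / (2 * N%:R ^+ 2).
    by rewrite -natr1; field.
  by [].
have := key N.
have -> : xk + (N%:R / N%:R) *: v = z by rewrite divff // scale1r /v addrC subrK.
have -> : L * Q * (N%:R * (N%:R + 1)) / (2 * N%:R ^+ 2) = L / 2 * Q + L / 2 * Q / N%:R by field.
by [].
Qed.

Lemma bigmax_ge (m : nat) (F : 'I_m -> R) i : F i <= \big[Num.max/0]_(j < m) F j.
Proof. by rewrite (bigD1 i) //= le_max lexx. Qed.

Lemma bigmax_ge0 (m : nat) (F : 'I_m -> R) : 0 <= \big[Num.max/0]_(j < m) F j.
Proof. by elim/big_rec: _ => // i y _ hy; rewrite le_max hy orbT. Qed.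
End Helpers.
Arguments dotv_ge0 {R d}.
Arguments grad0 {R d L mu f xk}.
Arguments descent {R d L mu f xk} z.

Theorem proposition6 (R : realType) (d n : nat)
  (f : 'I_n -> 'rV[R]_d -> R) (L mu : 'I_n -> R) (x : 'I_n -> 'rV[R]_d)
  (alpha : R) (xstar : 'rV[R]_d) :
  (0 < n)%N ->
  (forall i (y : 'rV[R]_d), differentiable (f i) y) ->
  (forall i, L_smooth (L i) (f i)) ->
  (forall i, 0 < mu i) ->
  (forall i, strongly_convex (mu i) (f i)) ->
  (forall i, is_minimizer (f i) (x i)) ->
  0 < alpha < 1 ->
  is_minimizer
    (fun y => (n%:R)^-1 * \sum_(i < n) f i (alpha *: y + (1 - alpha) *: x i))
    xstar ->
  (n%:R)^-1 * \sum_(i < n) enorm (x i - xstar) ^+ 2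
  <= (\big[Num.max/0]_(i < n) L i) / ((n%:R)^-1 * \sum_(i < n) mu i)
     * \big[Num.max/0]_(i < n) \big[Num.max/0]_(j < n) enorm (x i - x j) ^+ 2.
Proof.
move=> n0 _ hL hmu hsc hmin /andP[a0 a1] hstar.
set Lm := \big[Num.max/0]_(i < n) L i.
set mb := (n%:R)^-1 * \sum_(i < n) mu i.
set D := \big[Num.max/0]_(i < n) \big[Num.max/0]_(j < n) enorm (x i - x j) ^+ 2.
have hn : 0 < n%:R :> R by rewrite ltr0n.
have hni : 0 < n%:R^-1 :> R by rewrite invr_gt0.
have hmb : 0 < mb.
  rewrite /mb mulr_gt0 //.
  rewrite (bigD1 (Ordinal n0)) //=; apply: ltr_pwDl; first exact: hmu.
  by apply: sumr_ge0 => k _; exact: ltW.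
have hLm0 : 0 <= Lm by apply: bigmax_ge0.
have hLk : forall k, L k <= Lm by move=> k; apply: bigmax_ge.
have hD : forall i k, enorm (x i - x k) ^+ 2 <= D.
  move=> i k; apply: le_trans (@bigmax_ge R n (fun i0 => \big[Num.max/0]_(j < n) enorm (x i0 - x j) ^+ 2) i).
  exact: (@bigmax_ge R n (fun j => enorm (x i - x j) ^+ 2) k).
have hg : forall k, grad (f k) (x k) = 0.
  by move=> k; apply: (grad0 (hL k) (hsc k) (ltW (hmu k)) (hmin k)).
pose F := fun y => (n%:R)^-1 * \sum_(i < n) f i (alpha *: y + (1 - alpha) *: x i).
have hF : forall y, F xstar <= F y by exact: hstar.
have key : forall i, dotv (x i - xstar) (x i - xstar) <= Lm / mb * D.
  move=> i.
  set Q := dotv (x i - xstar) (x i - xstar).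
  have HQ : 0 <= Q := dotv_ge0 _.
  have stepA : alpha ^+ 2 * mb / 2 * Q <= F (x i) - F xstar.
    set C := alpha ^+ 2 * mb / 2 * Q.
    have Amin : 0 <= F (x i) - F xstar by have := hF (x i); lra.
    have Ht : forall t, 0 < t < 1 -> C * (1 - t) <= F (x i) - F xstar.
      move=> t /andP[t0 t1].
      set w := t *: x i + (1 - t) *: xstar.
      have hw := hF w.
      pose a k := alpha *: x i + (1 - alpha) *: x k.
      pose b k := alpha *: xstar + (1 - alpha) *: x k.
      set K := alpha ^+ 2 / 2 * (t * (1 - t)) * Q.
      have hk : forall k : 'I_n, f k (alpha *: w + (1 - alpha) *: x k) <=
          t * f k (a k) + (1 - t) * f k (b k) - mu k * K.
        move=> k.
        have E1 : alpha *: w + (1 - alpha) *: x k = t *: a k + (1 - t) *: b k.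
          by apply/matrixP => p q; rewrite !mxE; ring.
        have E2 : a k - b k = alpha *: (x i - xstar).
          by apply/matrixP => p q; rewrite !mxE; ring.
        have h := @sc_mid R d (mu k) (f k) (a k) (b k) t (hsc k).
        rewrite E1; apply: (le_trans (h _)); first by rewrite !ltW.
        rewrite E2 dotvZl dotvZr le_eqVlt; apply/orP; left; apply/eqP.
        rewrite /K /Q; ring.
      have hs : \sum_(k < n) f k (alpha *: w + (1 - alpha) *: x k) <=
          \sum_(k < n) (t * f k (a k) + (1 - t) * f k (b k) - mu k * K).
        by apply: ler_sum => k _; exact: hk k.
      rewrite sumrB big_split /= -!mulr_sumr -mulr_suml in hs.
      have hs2 := ler_wpM2l (ltW hni) hs.
      have EF : F w = n%:R^-1 * \sum_(k < n) f k (alpha *: w + (1 - alpha) *: x k) by [].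
      have EA : F (x i) = n%:R^-1 * \sum_(k < n) f k (a k) by [].
      have EB : F xstar = n%:R^-1 * \sum_(k < n) f k (b k) by [].
      have Id : n%:R^-1 * (t * \sum_(k < n) f k (a k) + (1 - t) * \sum_(k < n) f k (b k)
                  - (\sum_(k < n) mu k) * K) =
                t * F (x i) + (1 - t) * F xstar - mb * K.
        by rewrite EA EB /mb; ring.
      rewrite Id -EF in hs2.
      have : t * (C * (1 - t)) <= t * (F (x i) - F xstar).
        have -> : t * (C * (1 - t)) = mb * K by rewrite /C /K; ring.
        lra.
      by rewrite ler_pM2l.
    have [//|hlt] := leP C (F (x i) - F xstar).
    have C0 : 0 < C by lra.
    set t := (C - (F (x i) - F xstar)) / (2 * C).
    have t0 : 0 < t by rewrite divr_gt0 //; lra.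
    have t1 : t < 1 by rewrite ltr_pdivrMr; lra.
    have := Ht t; rewrite t0 t1 => /(_ isT).
    have -> : C * (1 - t) = (C + (F (x i) - F xstar)) / 2 by rewrite /t; field; lra.
    lra.
  have stepB : F (x i) - F xstar <= Lm / 2 * alpha ^+ 2 * D.
    have hFB : n%:R^-1 * \sum_(k < n) f k (x k) <= F xstar.
      by apply: ler_wpM2l; [exact: ltW | apply: ler_sum => k _; exact: hmin].
    have hFA : F (x i) <= n%:R^-1 * \sum_(k < n) (f k (x k) + Lm / 2 * alpha ^+ 2 * D).
      apply: ler_wpM2l; first exact: ltW.
      apply: ler_sum => k _.
      have h := descent (alpha *: x i + (1 - alpha) *: x k) (hL k) (hsc k) (ltW (hmu k)) (hg k).
      have E : alpha *: x i + (1 - alpha) *: x k - x k = alpha *: (x i - x k).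
        by apply/matrixP => p q; rewrite !mxE; ring.
      rewrite E dotvZl dotvZr in h.
      have h1 : L k * dotv (x i - x k) (x i - x k) <= Lm * D.
        apply: (le_trans (ler_wpM2r (dotv_ge0 _) (hLk k))).
        by apply: ler_wpM2l => //; rewrite -enorm_sq.
      have ha2 : 0 <= alpha ^+ 2 / 2 by apply: divr_ge0 => //; apply: sqr_ge0.
      have h3 := ler_wpM2l ha2 h1.
      have Eh : L k / 2 * (alpha * (alpha * dotv (x i - x k) (x i - x k))) =
        alpha ^+ 2 / 2 * (L k * dotv (x i - x k) (x i - x k)) by ring.
      rewrite Eh in h.
      have -> : Lm / 2 * alpha ^+ 2 * D = alpha ^+ 2 / 2 * (Lm * D) by ring.
      lra.
    have Ec : n%:R^-1 * \sum_(k < n) (f k (x k) + Lm / 2 * alpha ^+ 2 * D) =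
        n%:R^-1 * \sum_(k < n) f k (x k) + Lm / 2 * alpha ^+ 2 * D.
      rewrite big_split /= sumr_const card_ord mulrDr; congr (_ + _).
      by rewrite -(mulr_natl (Lm / 2 * alpha ^+ 2 * D) n) mulKf // gt_eqF.
    rewrite Ec in hFA.
    lra.
  have H : alpha ^+ 2 / 2 * (Q * mb) <= alpha ^+ 2 / 2 * (Lm * D).
    have -> : alpha ^+ 2 / 2 * (Q * mb) = alpha ^+ 2 * mb / 2 * Q by ring.
    have -> : alpha ^+ 2 / 2 * (Lm * D) = Lm / 2 * alpha ^+ 2 * D by ring.
    lra.
  rewrite ler_pM2l in H; last by rewrite divr_gt0 // exprn_gt0.
  by rewrite mulrAC ler_pdivlMr.
have hsum : \sum_(i < n) enorm (x i - xstar) ^+ 2 <= \sum_(i < n) (Lm / mb * D).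
  by apply: ler_sum => i _; rewrite enorm_sq.
rewrite sumr_const card_ord in hsum.
have := ler_wpM2l (ltW hni) hsum.
by rewrite -(mulr_natl (Lm / mb * D) n) mulKf // gt_eqF.
Qed.
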